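(* Let $Q$ be a finite quiver with arrow set $Q_1$ which is connected, has no loops or $2$-cycles, in which every vertex is the source of exactly two arrows and the target of exactly two arrows, and which is equipped with bijections $f,g:Q_1\to Q_1$ such that for every $\alpha\in Q_1$, $\{f(\alpha),g(\alpha)\}$ is the set of the two arrows starting at the target of $\alpha$, and $f^3=\mathrm{id}$. For $\alpha\in Q_1$ let $\bar\alpha$ be the other arrow with the same source as $\alpha$. Write $\mathrm{PSL}_2(\mathbb{Z})=\langle x,y\mid x^2=(xy)^3=1\rangle$. Then setting $x(\alpha)=\bar\alpha$ and $y(\alpha)=g(\alpha)$ defines an action of $\mathrm{PSL}_2(\mathbb{Z})$ on $Q_1$ (in which $xy$ acts as $f$); this action is transitive, and the subgroup of elements acting trivially is normal of finite index. *)

(* Defs.v *)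
From mathcomp Require Import all_boot.
Set Implicit Arguments. Unset Strict Implicit. Unset Printing Implicit Defensive.

Section Quiver.
Variables (V A : finType) (src tgt : A -> V).

Definition und_adj : rel V :=
  fun u v => [exists a, ((src a == u) && (tgt a == v)) || ((src a == v) && (tgt a == u))].

Definition quiver_connected : Prop := forall u v : V, connect und_adj u v.

Definition no_loops : Prop := forall a : A, src a != tgt a.

Definition no_2cycles : Prop :=
  forall a b : A, ~ (src a = tgt b /\ tgt a = src b).

(* the other arrow with the same source as a (a itself if there is none) *)
Definition bar (a : A) : A := odflt a [pick b | (src b == src a) && (b != a)].
End Quiver.

(* Words in the generators of PSL_2(Z) = < x, y | x^2 = (xy)^3 = 1 >:
   false = x, true = y. *)
Definition letter_x := false.
Definition letter_y := true.
Definition word := seq bool.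

(* the congruence on words generated by the defining relations;
   PSL_2(Z) is the quotient of words by this congruence *)
Inductive word_eq : word -> word -> Prop :=
| we_refl w : word_eq w w
| we_sym u v : word_eq u v -> word_eq v u
| we_trans u v w : word_eq u v -> word_eq v w -> word_eq u w
| we_cat u v u' v' : word_eq u u' -> word_eq v v' -> word_eq (u ++ v) (u' ++ v')
| we_rel_x : word_eq [:: letter_x; letter_x] [::]
| we_rel_xy : word_eq [:: letter_x; letter_y; letter_x; letter_y; letter_x; letter_y] [::].

Fixpoint act_word (T : Type) (X Y : T -> T) (w : word) (a : T) : T :=
  match w with
  | [::] => a
  | l :: w' => (if l then Y else X) (act_word X Y w' a)
  end.

(* Main.v *)
Require Import Defs.
From mathcomp Require Import all_boot.
From Stdlib Require Import Classical.

Lemma act_cat T (X Y : T -> T) u v a :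
  act_word X Y (u ++ v) a = act_word X Y u (act_word X Y v a).
Proof. by elim: u => //= l u ->. Qed.

Lemma act_nseq T (X Y : T -> T) n a : act_word X Y (nseq n true) a = iter n Y a.
Proof. by elim: n => //= n ->. Qed.

Definition inv_letter (l : bool) : word :=
  if l then [:: false; true; false; true; false] else [:: false].
Fixpoint winv (w : word) : word :=
  if w is l :: w' then winv w' ++ inv_letter l else [::].

Lemma we_mid v u u' t : word_eq u u' -> word_eq (v ++ u ++ t) (v ++ u' ++ t).
Proof. by move=> H; apply: we_cat; [apply: we_refl|apply: we_cat=> //; apply: we_refl]. Qed.

Lemma letter_r l : word_eq ([:: l] ++ inv_letter l) [::].
Proof.
case: l; last exact: we_rel_x.
apply: (@we_trans _ ([:: false; false] ++ [:: true; false; true; false; true; false])).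
  have := @we_cat [::] [:: true; false; true; false; true; false]
     [:: false; false] [:: true; false; true; false; true; false]
     (we_sym we_rel_x) (we_refl _).
  by [].
apply: (@we_trans _ ([:: false] ++ [::] ++ [:: false])); last exact: we_rel_x.
exact: (@we_mid [:: false] [:: false; true; false; true; false; true] [::] [:: false] we_rel_xy).
Qed.

Lemma letter_l l : word_eq (inv_letter l ++ [:: l]) [::].
Proof. case: l; [exact: we_rel_xy | exact: we_rel_x]. Qed.

Lemma winv_r w : word_eq (w ++ winv w) [::].
Proof.
elim: w => [|l w IH] /=; first exact: we_refl.
rewrite catA -cat1s -catA.
apply: we_trans (letter_r l).
rewrite [w ++ _]catA; exact: (@we_mid [:: l] _ _ (inv_letter l) IH).
Qed.

Lemma winv_l w : word_eq (winv w ++ w) [::].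
Proof.
elim: w => [|l w IH] /=; first exact: we_refl.
rewrite -catA -cat1s [inv_letter l ++ _]catA.
apply: we_trans IH.
exact: (@we_mid (winv w) _ _ w (letter_l l)).
Qed.

Theorem proposition3p3 (V A : finType) (src tgt : A -> V) (f g : A -> A) :
  quiver_connected src tgt ->
  no_loops src tgt ->
  no_2cycles src tgt ->
  (forall v : V, #|[set a | src a == v]| = 2) ->
  (forall v : V, #|[set a | tgt a == v]| = 2) ->
  bijective f -> bijective g ->
  (forall a : A, [set f a; g a] = [set b | src b == tgt a]) ->
  (forall a : A, f (f (f a)) = a) ->
  let act := act_word (bar src) g in
  (* the action is well defined on PSL_2(Z) *)
  (forall u v : word, word_eq u v -> forall a, act u a = act v a) /\
  (* xy acts as f *)
  (forall a, act [:: letter_x; letter_y] a = f a) /\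
  (* transitivity *)
  (forall a b : A, exists w : word, act w a = b) /\
  (* the kernel K = {w | w acts trivially} is normal ... *)
  (forall w w' k : word, word_eq (w' ++ w) [::] ->
     (forall a, act k a = a) -> forall a, act (w ++ k ++ w') a = a) /\
  (* ... and of finite index: finitely many left cosets r K cover PSL_2(Z) *)
  (exists reps : seq word, forall w : word,
     exists2 r, r \in reps & exists k : word, (forall a, act k a = a) /\ word_eq w (r ++ k)).
Proof.
move=> Hconn _ _ Hout _ fbij gbij Hfg Hf3 act; rewrite {}/act.
have Hsrc2 : forall a, exists b, (src b == src a) && (b != a).
  move=> a; have /eqP/cards2P [x [y [xy E]]] := Hout (src a).
  have : a \in [set b | src b == src a] by rewrite inE.
  have Hx : x \in [set b | src b == src a] by rewrite E !inE eqxx.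
  have Hy : y \in [set b | src b == src a] by rewrite E !inE eqxx orbT.
  rewrite !inE in Hx Hy.
  rewrite E !inE => /orP[/eqP Ha|/eqP Ha].
  - by exists y; rewrite Hy Ha eq_sym.
  - by exists x; rewrite Hx Ha.
have barP : forall a, src (bar src a) = src a /\ bar src a != a.
  move=> a; rewrite /bar; case: pickP => [b /andP[/eqP -> ->] //|H].
  by have [b Hb] := Hsrc2 a; rewrite H in Hb.
have out2 : forall a b, src b = src a -> b = a \/ b = bar src a.
  move=> a b Hb; have /eqP/cards2P [x [y [xy E]]] := Hout (src a).
  have mem : forall c, src c = src a -> c = x \/ c = y.
    move=> c Hc; have : c \in [set b | src b == src a] by rewrite inE Hc.
    by rewrite E !inE => /orP[/eqP|/eqP]; auto.
  have [Ha1 Ha2] := barP a.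
  move: (mem _ Hb) (mem _ (erefl _)) (mem _ Ha1) Ha2 xy.
  case=> -> [] -> [] ->; rewrite ?eqxx //= => *; by [left|right].
have barK : forall a, bar src (bar src a) = a.
  move=> a; have [H1 H2] := barP a; have [H3 H4] := barP (bar src a).
  case: (out2 a (bar src (bar src a))); first by rewrite H3.
    by [].
  by move=> E; rewrite E eqxx in H4.
have srcfg : forall a, src (f a) = tgt a /\ src (g a) = tgt a.
  move=> a; have := Hfg a => E.
  have Hf : f a \in [set b | src b == tgt a] by rewrite -E !inE eqxx.
  have Hg : g a \in [set b | src b == tgt a] by rewrite -E !inE eqxx orbT.
  by rewrite !inE in Hf Hg; rewrite (eqP Hf) (eqP Hg).
have bargf : forall a, bar src (g a) = f a.
  move=> a; have [Hf Hg] := srcfg a.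
  have fg : f a != g a.
    apply/negP => /eqP Heq; have := Hout (tgt a).
    by rewrite -Hfg Heq setUid cards1.
  case: (out2 (g a) (f a)); first by rewrite Hf Hg.
    by move=> Heq; rewrite Heq eqxx in fg.
  by [].
have wd : forall u v, word_eq u v -> forall a,
    act_word (bar src) g u a = act_word (bar src) g v a.
  move=> u v; elim.
  - by [].
  - by move=> u0 v0 _ IH a; rewrite IH.
  - by move=> u0 v0 w0 _ IH1 _ IH2 a; rewrite IH1 IH2.
  - by move=> u0 v0 u1 v1 _ IH1 _ IH2 a; rewrite !act_cat IH1 IH2.
  - by move=> a; rewrite /letter_x /letter_y /= barK.
  - by move=> a; rewrite /letter_x /letter_y /= !bargf Hf3.
split; first exact: wd.
split; first by move=> a; rewrite /letter_x /letter_y /= bargf.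
split.
  move=> a b.
  have rbar : forall c, (exists w, act_word (bar src) g w a = c) ->
      exists w, act_word (bar src) g w a = bar src c.
    by move=> c [w <-]; exists (false :: w).
  have rg : forall c, (exists w, act_word (bar src) g w a = c) ->
      exists w, act_word (bar src) g w a = g c.
    by move=> c [w <-]; exists (true :: w).
  have rw : forall w c, (exists w, act_word (bar src) g w a = c) ->
      exists w', act_word (bar src) g w' a = act_word (bar src) g w c.
    by move=> w c [w' <-]; exists (w ++ w'); rewrite act_cat.
  have rginv : forall c, (exists w, act_word (bar src) g w a = g c) ->
      exists w, act_word (bar src) g w a = c.
    move=> c Hc; have ginj : injective g := bij_inj gbij.
    have H : fconnect g (g c) c by rewrite fconnect_sym // fconnect1.
    rewrite -(iter_findex H) -(@act_nseq _ (bar src) g); exact: (rw _ _ Hc).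
  have rsrc : forall c d, (exists w, act_word (bar src) g w a = d) -> src c = src d ->
      exists w, act_word (bar src) g w a = c.
    by move=> c d Hd Hs; case: (out2 d c Hs) => ->; [done | exact: rbar].
  have step : forall x y, (exists2 c, (exists w, act_word (bar src) g w a = c) & src c = x) ->
      und_adj src tgt x y ->
      exists2 c, (exists w, act_word (bar src) g w a = c) & src c = y.
    move=> x y [d Hd Hdx] /existsP [c /orP [/andP[/eqP Hcx /eqP Hcy]|/andP[/eqP Hcy /eqP Hcx]]].
    - exists (g c); last by rewrite (srcfg c).2.
      by apply: rg; apply: rsrc Hd _; rewrite Hcx Hdx.
    - exists c => //.
      have : d \in [set f c; g c] by rewrite Hfg inE Hdx Hcx.
      rewrite !inE => /orP[/eqP Ed|/eqP Ed].
      + have -> : c = act_word (bar src) g [:: false; true; false; true] d.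
          by rewrite /= !bargf Ed !Hf3.
        exact: rw.
      + by rewrite Ed in Hd; exact: rginv.
  have allS : forall v, exists2 c, (exists w, act_word (bar src) g w a = c) & src c = v.
    move=> v; have /connectP [p Hp ->] := Hconn (src a) v.
    have : exists2 c, (exists w, act_word (bar src) g w a = c) & src c = src a.
      by exists a => //; exists [::].
    elim: p (src a) Hp => [|y p IH] x //= /andP[Hxy Hp] Hx.
    exact: IH Hp (step _ _ Hx Hxy).
  have [d Hd Hdb] := allS (src b).
  exact: rsrc Hd (esym Hdb).
split.
  move=> w w' k Hww Hk a.
  have H1 : forall b, act_word (bar src) g w' (act_word (bar src) g w b) = b.
    by move=> b; rewrite -act_cat (wd _ _ Hww).
  have /codomP [b ->] := injF_onto (can_inj H1) a.
  by rewrite !act_cat H1 Hk.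
have cover : forall L : seq {ffun A -> A}, exists reps : seq word, forall F, F \in L ->
    (exists w, [ffun x => act_word (bar src) g w x] = F) ->
    exists2 r, r \in reps & [ffun x => act_word (bar src) g r x] = F.
  elim=> [|F L [reps IH]]; first by exists [::].
  case: (classic (exists w, [ffun x => act_word (bar src) g w x] = F)) => [[w Hw]|Hn].
  - exists (w :: reps) => F'; rewrite inE => /orP[/eqP -> _|HL Hex].
      by exists w; rewrite ?inE ?eqxx.
    have [r Hr Er] := IH F' HL Hex; by exists r => //; rewrite inE Hr orbT.
  - exists reps => F'; rewrite inE => /orP[/eqP -> Hex|HL Hex]; [by case: Hn | exact: (IH F' HL Hex)].
have [reps Hreps] := cover (enum {ffun A -> A}).
exists reps => w.
have [r Hr Er] := Hreps [ffun x => act_word (bar src) g w x] (mem_enum _ _) (ex_intro _ w erefl).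
exists r => //; exists (winv r ++ w); split.
  move=> a.
  have Era : forall x, act_word (bar src) g r x = act_word (bar src) g w x.
    by move=> x; have := congr1 (fun F : {ffun A -> A} => F x) Er; rewrite !ffunE.
  by rewrite act_cat -Era -act_cat (wd _ _ (winv_l r)).
rewrite catA; exact: (we_sym (we_cat (winv_r r) (we_refl w))).
Qed.
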